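(* Suppose $w,w'\in[d]^n$ differ in exactly one coordinate, and let $\lambda=\mathrm{shRSK}(w)$, $\lambda'=\mathrm{shRSK}(w')$. Then for every $k\in[d]$: $|(\lambda_1+\cdots+\lambda_k)-(\lambda'_1+\cdots+\lambda'_k)|\le1$ and $|\lambda_k-\lambda'_k|\le2$.
   Context: $\mathrm{shRSK}(w)$ is the RSK shape of $w$: the Young diagram $\lambda_1\ge\cdots\ge\lambda_d\ge0$ whose first $k$ rows sum to the maximum total length of a union of $k$ disjoint weakly increasing subsequences of $w$. *)

(* Defs.v *)
From mathcomp Require Import all_boot.
Set Implicit Arguments. Unset Strict Implicit. Unset Printing Implicit Defensive.

(* A word w in [d]^n is a function 'I_n -> 'I_d (letters 0..d-1, order preserved). *)

Definition weakly_incr_on (n d : nat) (w : 'I_n -> 'I_d) (S : {set 'I_n}) : bool :=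
  [forall i in S, forall j in S, (i < j)%N ==> (w i <= w j)%N].

Definition incr_family (n d k : nat) (w : 'I_n -> 'I_d)
    (F : {ffun 'I_k -> {set 'I_n}}) : bool :=
  [forall a, weakly_incr_on w (F a)] &&
  [forall a, forall b, (a != b) ==> [disjoint F a & F b]].

Definition greene (n d : nat) (w : 'I_n -> 'I_d) (k : nat) : nat :=
  \max_(F : {ffun 'I_k -> {set 'I_n}} | incr_family w F) #|\bigcup_(a < k) F a|.

(* The RSK shape, 1-indexed: shRSK w k = lambda_k = greene k - greene (k-1). *)
Definition shRSK (n d : nat) (w : 'I_n -> 'I_d) (k : nat) : nat :=
  greene w k - greene w k.-1.

(* Main.v *)
Require Import Defs.
From mathcomp Require Import all_boot.
From mathcomp Require Import zify.

Lemma greene_step (n d : nat) (w w' : 'I_n -> 'I_d) (i : 'I_n) :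
  (forall j, j != i -> w j = w' j) ->
  forall k, (greene w k <= greene w' k + 1)%N.
Proof.
move=> Hw k; rewrite /greene.
apply/bigmax_leqP => F /andP[/forallP Hinc /forallP Hdis].
set F' := [ffun a => F a :\ i].
have HF' : incr_family w' F'.
  apply/andP; split.
    apply/forallP => a; apply/forallP => x; apply/implyP => Hx.
    apply/forallP => y; apply/implyP => Hy; apply/implyP => Hxy.
    move: Hx Hy; rewrite !ffunE !in_setD1 => /andP[Hxi Hx] /andP[Hyi Hy].
    rewrite -(Hw _ Hxi) -(Hw _ Hyi).
    have := Hinc a => /forallP /(_ x) /implyP /(_ Hx) /forallP /(_ y)
      /implyP /(_ Hy) /implyP; exact.
  apply/forallP => a; apply/forallP => b; apply/implyP => Hab.
  have := Hdis a => /forallP /(_ b) /implyP /(_ Hab) Hd.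
  rewrite !ffunE; apply: disjointWl (subD1set _ _) _.
  apply: disjointWr (subD1set _ _) _; exact: Hd.
have Hle := @leq_bigmax_cond _ (incr_family w') (fun F0 : {ffun 'I_k -> {set 'I_n}} =>
   #|\bigcup_(a < k) F0 a|) F' HF'.
apply: (@leq_trans (#|\bigcup_(a < k) F' a| + 1)); last exact: leq_add Hle (leqnn 1).
have Hsub : \bigcup_(a < k) F a \subset i |: \bigcup_(a < k) F' a.
  apply/subsetP => x /bigcupP[a _ Hx].
  rewrite in_setU1; case: eqP => //= /eqP Hxi.
  apply/bigcupP; exists a => //; rewrite ffunE in_setD1 Hxi.
  exact: Hx.
apply: leq_trans (subset_leq_card Hsub) _.
rewrite cardsU1 addnC leq_add2l; by case: (i \notin _).
Qed.

Theorem mainTheorem11 (n d : nat) (w w' : 'I_n -> 'I_d) :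
  #|[set i : 'I_n | w i != w' i]| = 1 ->
  forall k : nat, (1 <= k <= d)%N ->
    ((greene w k <= greene w' k + 1)%N /\ (greene w' k <= greene w k + 1)%N) /\
    ((shRSK w k <= shRSK w' k + 2)%N /\ (shRSK w' k <= shRSK w k + 2)%N).
Proof.
move=> H1 k _; have [i Hi] := cards1P (introT eqP H1).
have Hw : forall j, j != i -> w j = w' j.
  move=> j Hj; apply/eqP; apply/negPn; apply/negP => Hne.
  have : j \in [set i0 | w i0 != w' i0] by rewrite inE.
  by rewrite Hi inE (negbTE Hj).
have Hw' : forall j, j != i -> w' j = w j by move=> j /Hw ->.
have A := @greene_step _ _ _ _ i Hw k; have B := @greene_step _ _ _ _ i Hw' k.
have C := @greene_step _ _ _ _ i Hw k.-1; have D := @greene_step _ _ _ _ i Hw' k.-1.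
rewrite /shRSK.
move: A B C D; set a := greene w k; set b := greene w' k;
  set c := greene w k.-1; set e := greene w' k.-1 => A B C D.
split; first by split.
split; lia.
Qed.
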